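(* Let $G$ be a group and let $(t_1,\ldots,t_n)\in G^n$ be an $n$-tuple such that $t_{i+1}=t_i^{-1}$ for some $i$. Let $H$ be the subgroup of $G$ generated by $t_1,\ldots,t_{i-1},t_{i+2},\ldots,t_n$. Then for every $h\in H$ the $n$-tuple $(t_1,\ldots,t_{i-1},ht_ih^{-1},ht_{i+1}h^{-1},t_{i+2},\ldots,t_n)$ is braid-equivalent to $(t_1,\ldots,t_n)$.
   Context: An elementary transformation (braid move) of an $n$-tuple $(t_1,\ldots,t_n)\in G^n$ is, for some $1\leq i\leq n-1$, either the replacement of $(t_i,t_{i+1})$ by $(t_it_{i+1}t_i^{-1},t_i)$ or by $(t_{i+1},t_{i+1}^{-1}t_it_{i+1})$, leaving the other entries unchanged. Two $n$-tuples are braid-equivalent if one is obtained from the other by a finite sequence of elementary transformations. *)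

(* Defs.v *)
From Stdlib Require Import List Relations.
Import ListNotations.

Record group := Group {
  gcar :> Type;
  gmul : gcar -> gcar -> gcar;
  ginv : gcar -> gcar;
  gone : gcar;
  gmulA : forall x y z, gmul x (gmul y z) = gmul (gmul x y) z;
  gmul1 : forall x, gmul x gone = x;
  g1mul : forall x, gmul gone x = x;
  gmulV : forall x, gmul x (ginv x) = gone;
  gVmul : forall x, gmul (ginv x) x = gone
}.

Arguments gmul {G} : rename.
Arguments ginv {G} : rename.
Arguments gone {G} : rename.

Inductive in_gen {G : group} (S : G -> Prop) : G -> Prop :=
  | gen_base : forall x, S x -> in_gen S x
  | gen_one : in_gen S gone
  | gen_mul : forall x y, in_gen S x -> in_gen S y -> in_gen S (gmul x y)
  | gen_inv : forall x, in_gen S x -> in_gen S (ginv x).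

Definition braid_step {G : group} (s t : list G) : Prop :=
  exists (l r : list G) (a b : G),
    s = l ++ a :: b :: r /\
    (t = l ++ gmul (gmul a b) (ginv a) :: a :: r \/
     t = l ++ b :: gmul (gmul (ginv b) a) b :: r).

Definition braid_equiv {G : group} (s t : list G) : Prop :=
  clos_refl_trans (list G) braid_step s t.

(* Main.v *)
Require Import Defs.
From Stdlib Require Import List Relations.
Import ListNotations.

Section S.
Variable G : group.

Lemma inv_inv (x : G) : ginv (ginv x) = x.
Proof.
  rewrite <- (gmul1 G (ginv (ginv x))), <- (gVmul G x), gmulA, gVmul, g1mul.
  reflexivity.
Qed.

Lemma inv_mul (x y : G) : ginv (gmul x y) = gmul (ginv y) (ginv x).
Proof.
  rewrite <- (g1mul G (ginv (gmul x y))).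
  rewrite <- (gVmul G y) at 1.
  rewrite <- (g1mul G y) at 2.
  rewrite <- (gVmul G x).
  rewrite <- !gmulA. rewrite (gmulA _ x y), gmulV, gmul1. reflexivity.
Qed.

Lemma inv_one : ginv (@gone G) = gone.
Proof. rewrite <- (g1mul G (ginv gone)). apply gmulV. Qed.

Lemma step_sym (s t : list G) : braid_step s t -> braid_step t s.
Proof.
  intros (l & r & a & b & -> & [-> | ->]).
  - exists l, r, (gmul (gmul a b) (ginv a)), a. split; [reflexivity|].
    right. f_equal. f_equal.
    rewrite !gmulA, gVmul, g1mul, <- gmulA, gVmul, gmul1. reflexivity.
  - exists l, r, b, (gmul (gmul (ginv b) a) b). split; [reflexivity|].
    left. f_equal. f_equal.
    rewrite !gmulA, gmulV, g1mul, <- gmulA, gmulV, gmul1. reflexivity.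
Qed.

Lemma equiv_sym (s t : list G) : braid_equiv s t -> braid_equiv t s.
Proof.
  induction 1.
  - apply rt_step, step_sym; assumption.
  - apply rt_refl.
  - eapply rt_trans; eassumption.
Qed.

Lemma slide1 (L R : list G) (a u : G) :
  braid_equiv (L ++ a :: u :: ginv u :: R) (L ++ u :: ginv u :: a :: R).
Proof.
  eapply rt_trans; apply rt_step.
  - exists L, (ginv u :: R), a, u. split; [reflexivity|]. right. reflexivity.
  - exists (L ++ [u]), R, (gmul (gmul (ginv u) a) u), (ginv u).
    split; [rewrite <- app_assoc; reflexivity|]. right.
    rewrite <- app_assoc. simpl. f_equal. f_equal. f_equal.
    rewrite inv_inv, !gmulA, gmulV, g1mul, <- gmulA, gmulV, gmul1. reflexivity.
Qed.

Lemma slide (A B C : list G) (u : G) :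
  braid_equiv (A ++ B ++ u :: ginv u :: C) (A ++ u :: ginv u :: B ++ C).
Proof.
  revert A. induction B as [|b B IH]; intro A.
  - apply rt_refl.
  - eapply rt_trans.
    + specialize (IH (A ++ [b])). rewrite <- !app_assoc in IH. exact IH.
    + simpl. apply slide1.
Qed.

Lemma conj1 (L R : list G) (a u : G) :
  braid_equiv (L ++ a :: u :: ginv u :: R)
    (L ++ gmul (gmul a u) (ginv a) :: ginv (gmul (gmul a u) (ginv a)) :: a :: R).
Proof.
  eapply rt_trans; apply rt_step.
  - exists L, (ginv u :: R), a, u. split; [reflexivity|]. left. reflexivity.
  - exists (L ++ [gmul (gmul a u) (ginv a)]), R, a, (ginv u).
    split; [rewrite <- app_assoc; reflexivity|]. left.
    rewrite <- app_assoc. simpl. f_equal. f_equal. f_equal.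
    rewrite !inv_mul, inv_inv, gmulA. reflexivity.
Qed.

Lemma conj_adj (L R : list G) (a u : G) :
  braid_equiv (L ++ a :: u :: ginv u :: R)
    (L ++ a :: gmul (gmul a u) (ginv a) :: ginv (gmul (gmul a u) (ginv a)) :: R).
Proof.
  eapply rt_trans. apply conj1. apply equiv_sym, slide1.
Qed.

Lemma conj_adj_r (L R : list G) (a u : G) :
  braid_equiv (L ++ u :: ginv u :: a :: R)
    (L ++ gmul (gmul a u) (ginv a) :: ginv (gmul (gmul a u) (ginv a)) :: a :: R).
Proof.
  eapply rt_trans. apply equiv_sym, slide1.
  eapply rt_trans. apply conj_adj. apply slide1.
Qed.

End S.

Theorem lemma1p9 (G : group) (l r : list G) (t h : G) :
  in_gen (fun x : G => In x l \/ In x r) h ->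
  braid_equiv (l ++ t :: ginv t :: r)
              (l ++ gmul (gmul h t) (ginv h)
                   :: gmul (gmul h (ginv t)) (ginv h) :: r).
Proof.
  intro Hh.
  assert (E : gmul (gmul h (ginv t)) (ginv h) = ginv (gmul (gmul h t) (ginv h))).
  { rewrite !inv_mul, inv_inv, gmulA. reflexivity. }
  rewrite E. clear E. revert t.
  induction Hh as [x [Hx|Hx] | | x y Hx IHx Hy IHy | x Hx IHx]; intro u.
  - destruct (in_split _ _ Hx) as (l1 & l2 & ->).
    rewrite <- !app_assoc. simpl.
    eapply rt_trans.
    { pose proof (slide G (l1 ++ [x]) l2 r u) as S. rewrite <- !app_assoc in S. exact S. }
    eapply rt_trans. { apply conj_adj. }
    apply equiv_sym.
    pose proof (slide G (l1 ++ [x]) l2 r (gmul (gmul x u) (ginv x))) as S.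
    rewrite <- !app_assoc in S. exact S.
  - destruct (in_split _ _ Hx) as (r1 & r2 & ->).
    eapply rt_trans. { apply equiv_sym, slide. }
    rewrite app_assoc.
    eapply rt_trans. { apply conj_adj_r. }
    rewrite <- app_assoc.
    apply slide.
  - rewrite inv_one, gmul1, g1mul. apply rt_refl.
  - eapply rt_trans. apply (IHy u).
    specialize (IHx (gmul (gmul y u) (ginv y))).
    replace (gmul (gmul (gmul x y) u) (ginv (gmul x y)))
      with (gmul (gmul x (gmul (gmul y u) (ginv y))) (ginv x)).
    exact IHx.
    rewrite inv_mul, !gmulA. reflexivity.
  - apply equiv_sym.
    specialize (IHx (gmul (gmul (ginv x) u) (ginv (ginv x)))).
    replace (gmul (gmul x (gmul (gmul (ginv x) u) (ginv (ginv x)))) (ginv x)) with u in IHx.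
    exact IHx.
    rewrite inv_inv, !gmulA, gmulV, g1mul, <- gmulA, gmulV, gmul1. reflexivity.
Qed.
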